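(* For all integers $d\geq 1$, $C_d=W_d$.
   Context: Every Boolean function $f:\{0,1\}^n\to\{0,1\}$ has a unique multilinear representation $f=\sum_{S\subseteq[n]}a_S\prod_{i\in S}x_i$ over $\mathbb{R}$ agreeing with $f$ on $\{0,1\}^n$; $\deg(f)$ is the degree of this representation. A variable $x_i$ is relevant if it appears in a monomial with nonzero coefficient; $R(f)$ is the number of relevant variables. $R_d$ is the maximum of $R(f)$ over Boolean functions of degree at most $d$, and $C_d=R_d2^{-d}$. For a relevant variable $x_i$, $\deg_i(f)$ is the maximum of $|S|$ over sets $S\ni i$ with $a_S\neq 0$, and $w_i(f)=2^{-\deg_i(f)}$ (for irrelevant variables, $w_i(f)=0$). The weight of $f$ is $W(f)=\sum_i w_i(f)$, and $W_d$ is the maximum of $W(f)$ over all Boolean functions $f$ of degree at most $d$. *)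

(* Defs.v *)
From HB Require Import structures.
From mathcomp Require Import all_boot all_order all_algebra.
From mathcomp Require Import all_classical all_reals ereal.
Set Implicit Arguments. Unset Strict Implicit. Unset Printing Implicit Defensive.
Import Order.TTheory GRing.Theory Num.Theory.
Local Open Scope ring_scope.
Local Open Scope classical_set_scope.

Section BoolFun.
Variable R : realType.
Variable n : nat.

Definition boolfun := {ffun 'I_n -> bool} -> bool.

Definition coefs := {set 'I_n} -> R.

(* a is the multilinear representation of f: sum_S a_S prod_{i in S} x_i
   agrees with f on {0,1}^n (such a is unique). *)
Definition is_multilinear_rep (f : boolfun) (a : coefs) : Prop :=
  forall x : {ffun 'I_n -> bool},
    ((f x : nat)%:R : R) = \sum_(S : {set 'I_n}) a S * \prod_(i in S) ((x i : nat)%:R).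

Definition deg_le (a : coefs) (d : nat) : Prop :=
  forall S, a S != 0 -> (#|S| <= d)%N.

Definition relevant (a : coefs) (i : 'I_n) : bool :=
  [exists S : {set 'I_n}, (i \in S) && (a S != 0)].

Definition num_relevant (a : coefs) : nat := #|[set i | relevant a i]|.

Definition deg_var (a : coefs) (i : 'I_n) : nat :=
  \max_(S : {set 'I_n} | (i \in S) && (a S != 0)) #|S|.

Definition wt_var (a : coefs) (i : 'I_n) : R :=
  if relevant a i then (2%:R ^- deg_var a i) else 0.

Definition weight (a : coefs) : R := \sum_(i < n) wt_var a i.

End BoolFun.

(* R_d: the maximum (taken as supremum in the extended reals) of R(f) over all
   Boolean functions f (on any number n of variables) of degree at most d. *)
Definition R_d (R : realType) (d : nat) : \bar R :=
  ereal_sup [set y | exists n (f : boolfun n) (a : coefs R n),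
                is_multilinear_rep f a /\ deg_le a d /\
                y = ((num_relevant a)%:R : R)%:E].

Definition C_d (R : realType) (d : nat) : \bar R :=
  (R_d R d * ((2%:R : R) ^- d)%:E)%E.

Definition W_d (R : realType) (d : nat) : \bar R :=
  ereal_sup [set y | exists n (f : boolfun n) (a : coefs R n),
                is_multilinear_rep f a /\ deg_le a d /\
                y = (weight a)%:E].

(* Main.v *)
Require Import Defs.
From mathcomp Require Import all_boot all_order all_algebra.
From mathcomp Require Import all_classical all_reals ereal.
From HB Require Import structures.
Set Implicit Arguments. Unset Strict Implicit. Unset Printing Implicit Defensive.
Import Order.TTheory GRing.Theory Num.Theory.
Local Open Scope ring_scope.

Section Rep.
Variable R : realType.
Variable V : finType.

Definition mon (S : {set V}) (x : {ffun V -> bool}) : R :=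
  \prod_(i in S) ((x i : nat)%:R).

Lemma monE S x : mon S x = (S \subset [set i | x i])%:R.
Proof.
rewrite /mon; case: (boolP (S \subset _)) => [/fintype.subsetP sub|].
  by apply: big1 => i /sub; rewrite inE => ->.
case/fintype.subsetPn => i iS; rewrite inE => /negbTE xi.
by rewrite (bigD1 i) //= xi mul0r.
Qed.

Lemma prodE (S : {set V}) (x : {ffun V -> bool}) : \prod_(i in S) ((x i : nat)%:R : R) = (S \subset [set i | x i])%:R.
Proof. exact: monE. Qed.

Lemma monU S T x : mon (S :|: T) x = mon S x * mon T x.
Proof. rewrite !monE finset.subUset; case: (S \subset _); case: (T \subset _); by rewrite /= ?(mul1r, mul0r, mulr0). Qed.

Definition rep_in (P : {set V} -> Prop) (g : {ffun V -> bool} -> R) :=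
  exists A : {set V} -> R, (forall S, A S != 0 -> P S) /\
    forall x, g x = \sum_(S : {set V}) A S * mon S x.

Lemma rep_weaken (P Q : {set V} -> Prop) g :
  (forall S, P S -> Q S) -> rep_in P g -> rep_in Q g.
Proof. by move=> PQ [A [HA Hg]]; exists A; split => // S /HA /PQ. Qed.

Lemma rep_ext P g h : (forall x, g x = h x) -> rep_in P g -> rep_in P h.
Proof. by move=> gh [A [HA Hg]]; exists A; split => // x; rewrite -gh. Qed.

Lemma rep0 P : rep_in P (fun _ => 0).
Proof.
exists (fun _ => 0); split; first by move=> S; rewrite eqxx.
by move=> x; rewrite big1 // => S _; rewrite mul0r.
Qed.

Lemma repD P g h : rep_in P g -> rep_in P h -> rep_in P (fun x => g x + h x).
Proof.
move=> [A [HA Hg]] [B [HB Hh]]; exists (fun S => A S + B S); split.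
  move=> S; case: (eqVneq (A S) 0) => [->|/HA //]; rewrite add0r; exact: HB.
by move=> x; rewrite Hg Hh -big_split /=; apply: eq_bigr => S _; rewrite mulrDl.
Qed.

Lemma repZ P c g : rep_in P g -> rep_in P (fun x => c * g x).
Proof.
move=> [A [HA Hg]]; exists (fun S => c * A S); split.
  by move=> S; rewrite mulf_eq0 negb_or => /andP[_ /HA].
by move=> x; rewrite Hg big_distrr /=; apply: eq_bigr => S _; rewrite mulrA.
Qed.

Lemma rep_sum P (I : Type) (s : seq I) (Pi : pred I) (F : I -> {ffun V -> bool} -> R) :
  (forall i, Pi i -> rep_in P (F i)) ->
  rep_in P (fun x => \sum_(i <- s | Pi i) F i x).
Proof.
move=> HF; elim: s => [|i s IH].
  by apply: rep_ext (rep0 P) => x; rewrite big_nil.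
case: (boolP (Pi i)) => Hi.
  by apply: rep_ext (repD (HF i Hi) IH) => x; rewrite big_cons Hi.
by apply: rep_ext IH => x; rewrite big_cons (negbTE Hi).
Qed.

Lemma rep1 : rep_in (fun S => S = finset.set0) (fun _ => 1).
Proof.
exists (fun S => (S == finset.set0)%:R); split.
  by move=> S; case: (eqVneq S finset.set0) => // _; rewrite eqxx.
move=> x; rewrite (bigD1 finset.set0) //= eqxx mul1r /mon big_set0 big1 ?addr0 //.
by move=> S /negbTE ->; rewrite mul0r.
Qed.

Lemma repvar v : rep_in (fun S => S = (finset.set1 v)) (fun x => (x v : nat)%:R).
Proof.
exists (fun S => (S == (finset.set1 v))%:R); split.
  by move=> S; case: (eqVneq S (finset.set1 v)) => // _; rewrite eqxx.
move=> x; rewrite (bigD1 (finset.set1 v)) //= eqxx mul1r /mon big_set1 big1 ?addr0 //.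
by move=> S /negbTE ->; rewrite mul0r.
Qed.

Lemma repM (P Q : {set V} -> Prop) g h : rep_in P g -> rep_in Q h ->
  rep_in (fun U => exists S T, P S /\ Q T /\ U = S :|: T) (fun x => g x * h x).
Proof.
move=> [A [HA Hg]] [B [HB Hh]].
exists (fun U => \sum_(S : {set V}) \sum_(T : {set V} | S :|: T == U) A S * B T).
split.
  move=> U HU; apply: contrapT => Hn; move/negP: HU; apply; apply/eqP.
  apply: big1 => S _; apply: big1 => T /eqP SU.
  case: (eqVneq (A S) 0) => [->|/HA PS]; first by rewrite mul0r.
  case: (eqVneq (B T) 0) => [->|/HB QT]; first by rewrite mulr0.
  by exfalso; apply: Hn; exists S, T.
move=> x; rewrite Hg Hh big_distrl /=.
under eq_bigr do rewrite big_distrr /=.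
have E U : (\sum_(S : {set V}) \sum_(T : {set V} | S :|: T == U) A S * B T) * mon U x =
   \sum_(S : {set V}) \sum_(T : {set V}) (if S :|: T == U then A S * B T * mon U x else 0).
  rewrite big_distrl /=; apply: eq_bigr => S _; rewrite big_distrl /= big_mkcond /=.
  by apply: eq_bigr => T _; case: ifP; rewrite ?mul0r.
rewrite (eq_bigr _ (fun U _ => E U)) [RHS]exchange_big /=; apply: eq_bigr => S _.
rewrite exchange_big /=; apply: eq_bigr => T _.
rewrite -big_mkcond /= (big_pred1 (S :|: T)) => [|U]; last by rewrite eq_sym.
rewrite monU !mulrA; congr (_ * _); rewrite -!mulrA; congr (_ * _); exact: mulrC.
Qed.

Lemma rep_prod (Q : nat -> {set V} -> Prop) m (I : eqType) (s : seq I)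
   (F : I -> {ffun V -> bool} -> R) :
  Q 0%N finset.set0 -> (forall m1 m2 S T, Q m1 S -> Q m2 T -> Q (m1 + m2)%N (S :|: T)) ->
  (forall i, i \in s -> rep_in (Q m) (F i)) ->
  rep_in (Q (size s * m)%N) (fun x => \prod_(i <- s) F i x).
Proof.
move=> Q0 QU; elim: s => [|i s IH] HF.
  apply: rep_ext (rep_weaken _ rep1) => [x|S ->//]; by rewrite big_nil.
have HFi := HF i (mem_head i s).
have IH' := IH (fun j js => HF j (@mem_behead _ (i :: s) j js)).
apply: rep_ext (rep_weaken _ (repM HFi IH')) => [x|U [S [T [QS [QT ->]]]]].
  by rewrite big_cons.
by rewrite /= mulSn; apply: QU.
Qed.

Definition flip (x : {ffun V -> bool}) v : {ffun V -> bool} :=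
  [ffun u => if u == v then ~~ x u else x u].

Lemma sem_rel (A : {set V} -> R) (v : V) :
  (forall S : {set V}, v \in S -> A S = 0) ->
  forall x, \sum_(S : {set V}) A S * mon S x = \sum_(S : {set V}) A S * mon S (flip x v).
Proof.
move=> H x; apply: eq_bigr => S _.
case: (boolP (v \in S)) => vS; first by rewrite H // !mul0r.
congr (_ * _); apply: eq_bigr => i iS; rewrite ffunE.
by case: eqP => // eiv; rewrite -eiv iS in vS.
Qed.

End Rep.

Lemma f_dep (R : realType) n (f : boolfun n) (a : coefs R n) k :
  is_multilinear_rep f a -> relevant a k -> exists z, f z != f (flip z k).
Proof.
move=> Hf /existsP [S /andP [kS aS]].
elim: {S}#|S|.+1 {-2}S (ltnSn #|S|) kS aS => // m IH S ltS kS aS.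
case: (pselect (exists T : {set 'I_n}, [/\ T \proper S, k \in T & a T != 0])) => [[T [TS kT aT]]|Hno].
  by apply: (IH T) => //; exact: leq_trans (proper_card TS) ltS.
have Hmin (T : {set 'I_n}) : T \proper S -> k \in T -> a T = 0.
  move=> TS kT; apply/eqP; apply: contrapT => aT; apply: Hno; exists T; split => //.
  exact/negP.
pose z : {ffun 'I_n -> bool} := [ffun i => i \in S].
have Ez : [set i | z i] = S by apply/setP => i; rewrite !inE ffunE.
have Ez' : [set i | flip z k i] = S :\ k.
  apply/setP => i; rewrite !inE !ffunE; case: (eqVneq i k) => [->|] //=.
  by rewrite kS.
exists z; apply/negP => /eqP Heq.
have : ((f z : nat)%:R : R) - (f (flip z k) : nat)%:R = a S.
  rewrite !Hf -sumrB (bigD1 S) //= [X in _ + X = _]big1 ?addr0.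
    rewrite (@prodE _ _ S z) (@prodE _ _ S (flip z k)) Ez Ez' subxx.
    have -> : (S \subset S :\ k) = false.
      by apply/negbTE/negP => /fintype.subsetP /(_ k kS); rewrite !inE eqxx.
    by rewrite -mulrBr /= subr0 mulr1.
  move=> T TS; rewrite -mulrBr (@prodE _ _ T z) (@prodE _ _ T (flip z k)) Ez Ez'.
  case: (eqVneq (a T) 0) => [->|aT]; first by rewrite mul0r.
  case: (boolP (k \in T)) => kT.
    have -> : (T \subset S :\ k) = false.
      by apply/negbTE/negP => /fintype.subsetP /(_ k kT); rewrite !inE eqxx.
    case: (boolP (T \subset S)) => TsS; last by rewrite subrr mulr0.
    by rewrite Hmin ?eqxx // in aT; rewrite finset.properEneq TS TsS.
  suff -> : (T \subset S :\ k) = (T \subset S) by rewrite subrr mulr0.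
  apply/idP/idP => /fintype.subsetP H; apply/fintype.subsetP => i iT; have := H i iT;
    rewrite !inE; first by case/andP.
  by move=> ->; rewrite andbT; apply: contraNneq kT => <-.
by rewrite Heq subrr => /esym/eqP; rewrite (negbTE aS).
Qed.

Section Constr.
Variables (R : realType) (n : nat) (f : boolfun n) (a : coefs R n) (d : nat).

Definition lv (k : 'I_n) := (d - deg_var a k)%N.
Definition Tt := {k : 'I_n & {ffun 'I_(lv k) -> bool}}.
Definition Vt := ('I_d.+1 + Tt)%type.
Definition NN := #|{: Vt}|.
Definition ev (v : Vt) : 'I_NN := enum_rank v.
Definition tg k (c : {ffun 'I_(lv k) -> bool}) : Tt := Tagged (fun k => {ffun 'I_(lv k) -> bool}) c.
Definition yv (j : nat) : 'I_NN := ev (inl (inord j)).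
Definition pi (w : {ffun 'I_NN -> bool}) k : {ffun 'I_(lv k) -> bool} := [ffun j : 'I_(lv k) => w (yv j)].
Definition subw (w : {ffun 'I_NN -> bool}) : {ffun 'I_n -> bool} :=
  [ffun k => w (ev (inr (tg (pi w k))))].
Definition Fb : boolfun NN := fun w => f (subw w).

Definition evi (u : 'I_NN) : Vt := enum_val u.

Definition Xset : {set 'I_NN} := [set u | if evi u is inr _ then true else false].
Definition Yset L : {set 'I_NN} := [set u | if evi u is inl j then (j < L)%N else false].
Definition Q L m (U : {set 'I_NN}) := (#|U :&: Xset| <= m)%N /\ U :\: Xset \subset Yset L.

Lemma Q0 L : Q L 0 finset.set0.
Proof. split; first by rewrite finset.set0I cards0. by rewrite finset.set0D finset.sub0set. Qed.

Lemma QU L m1 m2 S T : Q L m1 S -> Q L m2 T -> Q L (m1 + m2) (S :|: T).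
Proof.
move=> [S1 S2] [T1 T2]; split.
  rewrite finset.setIUl; apply: leq_trans (leq_card_setU _ _).1 _; exact: leq_add.
by rewrite finset.setDUl finset.subUset S2 T2.
Qed.

Lemma Yset_card L : (#|Yset L| <= L)%N.
Proof.
apply: (@leq_trans #|[set yv j | j : 'I_L]|); last by rewrite (leq_trans (leq_imset_card _ _)) ?card_ord.
apply: subset_leq_card; apply/fintype.subsetP => u; rewrite inE.
rewrite /evi; case E: (enum_val u) => [j|//] jL; apply/imsetP; exists (Ordinal jL) => //.
by rewrite /yv /ev /= inord_val -E enum_valK.
Qed.

Lemma Q_card L m U : Q L m U -> (#|U| <= m + L)%N.
Proof.
move=> [U1 U2]; rewrite -(cardsID Xset U); apply: leq_add => //.
exact: leq_trans (subset_leq_card U2) (Yset_card L).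
Qed.

Lemma evK v : evi (ev v) = v.
Proof. exact: enum_rankK. Qed.

Lemma lv_le k : (lv k <= d)%N.
Proof. exact: leq_subr. Qed.

Lemma Q_y L j : (j < L)%N -> (j <= d)%N -> Q L 0 [set yv j].
Proof.
move=> jL jd; split.
  rewrite leqn0 cards_eq0; apply/eqP/setP => u; rewrite !inE.
  by case: (eqVneq u (yv j)) => [->|] //=; rewrite /yv evK.
apply/fintype.subsetP => u; rewrite !inE => /andP[_ /eqP ->].
by rewrite /yv evK inordK.
Qed.

Lemma Q_x L t : Q L 1 [set ev (inr t)].
Proof.
split; first by rewrite -(cards1 (ev (inr t))); apply: subset_leq_card; apply: finset.subsetIl.
apply/fintype.subsetP => u; rewrite !inE => /andP[+ /eqP E]; by rewrite E evK.
Qed.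

Lemma rep_bit L (b : bool) j : (j < L)%N -> (j <= d)%N ->
  rep_in (Q L 0) (fun w => ((((b == w (yv j)) : bool) : nat)%:R : R)).
Proof.
move=> jL jd.
have Hv : rep_in (Q L 0) (fun w => (((w (yv j) : bool) : nat)%:R : R)).
  by apply: rep_weaken (repvar R (yv j)) => S ->; exact: Q_y.
case: b.
  by apply: rep_ext Hv => w; case: (w (yv j)).
have H1 : rep_in (Q L 0) (fun _ => 1 : R).
  by apply: rep_weaken (rep1 R 'I_NN) => S ->; exact: Q0.
apply: rep_ext (repD H1 (repZ (-1) Hv)) => w.
by case: (w (yv j)) => /=; rewrite ?mulr1 ?mulr0 ?addr0 ?subrr.
Qed.

Lemma subw_expand w k : ((subw w k : nat)%:R : R) =
  \sum_(c : {ffun 'I_(lv k) -> bool})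
     (\prod_(j <- enum 'I_(lv k)) ((((c j == w (yv j)) : bool) : nat)%:R : R)) *
     ((w (ev (inr (tg c))) : bool) : nat)%:R.
Proof.
rewrite (bigD1 (pi w k)) //= big1 => [|j _]; last by rewrite ffunE eqxx.
rewrite mul1r [X in _ = _ + X]big1 ?addr0; first by rewrite ffunE.
move=> c cpi.
have [j cj] : exists j, c j != pi w k j.
  apply/existsP; move: cpi; apply: contraNT; rewrite negb_exists => /forallP H.
  by apply/eqP/ffunP => j; apply/eqP; have := H j; rewrite negbK.
rewrite (bigD1_seq j) ?mem_enum ?enum_uniq //=.
by rewrite ffunE in cj; rewrite (negbTE cj) !mul0r.
Qed.

Lemma rep_X L k : (lv k <= L)%N -> rep_in (Q L 1) (fun w => ((subw w k : nat)%:R : R)).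
Proof.
move=> kL; apply: rep_ext (fun w => esym (subw_expand w k)) _.
apply: rep_sum => c _.
have Hb : rep_in (Q L 0) (fun w => \prod_(j <- enum 'I_(lv k)) ((((c j == w (yv j)) : bool) : nat)%:R : R)).
  have H := @rep_prod R _ (Q L) 0 _ (enum 'I_(lv k))
     (fun j w => ((((c j == w (yv j)) : bool) : nat)%:R : R)) (Q0 L) (@QU L).
  rewrite muln0 in H; apply: H => j _; apply: rep_bit.
    exact: leq_trans (ltn_ord j) kL.
  exact: ltnW (leq_trans (ltn_ord j) (lv_le k)).
have Hx : rep_in (Q L 1) (fun w => (((w (ev (inr (tg c))) : bool) : nat)%:R : R)).
  by apply: rep_weaken (repvar R _) => S ->; exact: Q_x.
apply: rep_weaken (repM Hb Hx) => U [S [T [QS [QT ->]]]]; exact: (QU QS QT).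
Qed.

Hypothesis Hf : is_multilinear_rep f a.
Hypothesis Hd : deg_le a d.

Lemma deg_var_ge (S : {set 'I_n}) i : i \in S -> a S != 0 -> (#|S| <= deg_var a i)%N.
Proof. by move=> iS aS; rewrite /deg_var; apply: (leq_bigmax_cond S); rewrite iS aS. Qed.

Lemma deg_var_le i : (deg_var a i <= d)%N.
Proof. by apply/bigmax_leqP => S /andP[_ /Hd]. Qed.

Lemma Fb_rep : exists A : {set 'I_NN} -> R, is_multilinear_rep Fb A /\ deg_le A d.
Proof.
have H : rep_in (fun U : {set 'I_NN} => (#|U| <= d)%N) (fun w => ((Fb w : nat)%:R : R)).
  apply: rep_ext (fun w => esym (Hf (subw w))) _.
  apply: rep_sum => S _.
  case: (eqVneq (a S) 0) => [->|aS].
    by apply: rep_ext (rep0 _ _) => w; rewrite mul0r.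
  apply: repZ.
  have Sd : (#|S| <= d)%N by apply: Hd.
  have H := @rep_prod R _ (Q (d - #|S|)) 1 _ (enum S) (fun i w => ((subw w i : nat)%:R : R))
     (Q0 _) (@QU _).
  rewrite muln1 -cardE in H.
  apply: (@rep_ext _ _ _ (fun w => \prod_(i <- enum S) ((subw w i : nat)%:R : R))) => [w|].
    by rewrite big_enum.
  apply: rep_weaken (H _) => [U /Q_card|i]; first by rewrite subnKC.
  rewrite mem_enum => iS; apply: rep_X; apply: leq_sub2l; exact: deg_var_ge.
case: H => A [HA HAe]; exists A; split => [x|S /HA //]; exact: HAe x.
Qed.

Lemma Fb_rel (A : {set 'I_NN} -> R) : is_multilinear_rep Fb A -> forall t : Tt, relevant a (tag t) -> relevant A (ev (inr t)).
Proof.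
move=> HA [k c] /= rk; apply: contrapT => /negP nr.
set v := ev (inr (tg c)).
have H0 : forall S : {set 'I_NN}, v \in S -> A S = 0.
  move=> S vS; apply/eqP; move: nr; rewrite negb_exists => /forallP /(_ S).
  by rewrite vS /= negbK.
have [z hz] := f_dep Hf rk.
pose w : {ffun 'I_NN -> bool} := [ffun u => match evi u with
   | inl j => [exists j' : 'I_(lv k), (val j' == val j) && c j']
   | inr t' => z (tag t') end].
have piw : pi w k = c.
  apply/ffunP => j; rewrite !ffunE /yv evK /= inordK; last first.
    by rewrite ltnS; exact: ltnW (leq_trans (ltn_ord j) (lv_le k)).
  apply/existsP/idP => [[j' /andP [/eqP/val_inj -> //]]| cj].
  by exists j; rewrite eqxx.
have subww : subw w = z by apply/ffunP => k'; rewrite !ffunE evK.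
have piflip k' : pi (flip w v) k' = pi w k'.
  apply/ffunP => j; rewrite !ffunE.
  by rewrite /yv /v /ev (inj_eq enum_rank_inj).
have subwf : subw (flip w v) = flip z k.
  apply/ffunP => k'; rewrite !ffunE piflip evK /=.
  case: (eqVneq k' k) => [->|nk]; first by rewrite piw eqxx.
  case: eqP => // /enum_rank_inj E; exfalso; apply: (negP nk).
  by have := congr1 (fun v : Vt => if v is inr t then tag t else k) E => /= ->.
move: hz; rewrite -subwf -subww; apply/negP; rewrite negbK.
have := sem_rel H0 w; rewrite -HA -HA => E.
by apply/eqP; move: E; rewrite /Fb; case: (f (subw w)); case: (f (subw (flip w v))) => /= /eqP; rewrite ?oner_eq0 // eq_sym oner_eq0.
Qed.

Lemma count_rel (A : {set 'I_NN} -> R) : is_multilinear_rep Fb A ->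
  (\sum_(k | relevant a k) 2 ^ (lv k) <= num_relevant A)%N.
Proof.
move=> HA.
have -> : (\sum_(k | relevant a k) 2 ^ (lv k))%N = #|[set t : Tt | relevant a (tag t)]|.
  rewrite -sum1_card (eq_bigl (fun t : Tt => relevant a (tag t) && true)); last first.
    by move=> t; rewrite inE andbT.
  rewrite -(@sig_big_dep _ _ _ _ (fun k => {ffun 'I_(lv k) -> bool}) (relevant a) (fun _ _ => true) (fun _ _ => 1%N)).
  apply: eq_bigr => k _.
  by rewrite sum1_card card_ffun card_bool card_ord.
apply: (@leq_trans #|[set ev (inr t) | t in [set t : Tt | relevant a (tag t)]]|).
  by rewrite card_imset // => t1 t2 /enum_rank_inj [].
apply: subset_leq_card; apply/fintype.subsetP => u /imsetP [t]; rewrite inE => rt ->.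
by rewrite inE; exact: Fb_rel HA t rt.
Qed.

End Constr.

Lemma pw (R : realType) (d k : nat) : (k <= d)%N ->
  (2%:R : R) ^- k = (2 ^ (d - k))%:R * 2%:R ^- d.
Proof.
move=> kd; rewrite natrX -{2}(subnK kd) exprD invfM mulrA mulfV ?mul1r //.
Qed.

Lemma low (R : realType) n (a : coefs R n) d : deg_le a d ->
  (2%:R : R) ^- d * (num_relevant a)%:R <= weight a.
Proof.
move=> Hd; rewrite /weight /num_relevant /wt_var -big_mkcond /= -sum1_card natr_sum mulr_sumr.
rewrite [X in X <= _](eq_bigl (fun i => relevant a i)) => [|i]; last by rewrite unfold_in; apply/idP/idP => /asboolP.
apply: ler_sum => i ri; rewrite mulr1 (pw R (deg_var_le Hd i)).
rewrite -{1}[2%:R ^- d]mul1r; apply: ler_wpM2r.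
  by rewrite invr_ge0 exprn_ge0 // ler0n.
by rewrite ler1n expn_gt0.
Qed.

Lemma up (R : realType) n (f : boolfun n) (a : coefs R n) d :
  is_multilinear_rep f a -> deg_le a d ->
  exists N (F : boolfun N) (A : coefs R N), is_multilinear_rep F A /\ deg_le A d /\
    weight a <= (2%:R : R) ^- d * (num_relevant A)%:R.
Proof.
move=> Hf Hd; have [A [HA HAd]] := Fb_rep Hf Hd.
exists (NN a d), (Fb f (d:=d)), A; split => //; split => //.
rewrite /weight /wt_var -big_mkcond /=.
rewrite (eq_bigr (fun i => (2 ^ (lv a d i))%:R * 2%:R ^- d)) => [|i _]; last first.
  by rewrite (pw R (deg_var_le Hd i)).
rewrite -big_distrl /= -natr_sum mulrC; apply: ler_wpM2l.
  by rewrite invr_ge0 exprn_ge0 // ler0n.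
rewrite ler_nat; exact: count_rel Hf A HA.
Qed.

Theorem proposition1 (R : realType) (d : nat) : (1 <= d)%N -> C_d R d = W_d R d.
Proof.
move=> _; rewrite /C_d /W_d /R_d muleC -ereal_sup_pZl; last first.
  by rewrite invr_gt0 exprn_gt0 // ltr0n.
apply/eqP; rewrite eq_le; apply/andP; split.
  apply: ge_ereal_sup => y [x [n0 [f0 [a0 [Hf0 [Hd0 ->]]]]] <-].
  apply: le_ereal_sup_tmp; exists (weight a0)%:E; first by exists n0, f0, a0.
  rewrite -EFinM lee_fin; exact: low.
apply: ge_ereal_sup => y [n0 [f0 [a0 [Hf0 [Hd0 ->]]]]].
have [N [F [A [HF [HA Hw]]]]] := up Hf0 Hd0.
apply: le_ereal_sup_tmp; exists ((((2%:R : R) ^- d)%:E * ((num_relevant A)%:R)%:E)%E).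
  by exists ((num_relevant A)%:R)%:E => //; exists N, F, A.
by rewrite -EFinM lee_fin.
Qed.
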